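(* Let $P$ be the Petersen graph on vertex set $\{1,\dots,10\}$ with edges $12,23,34,45,51$ (outer pentagon), $16,27,38,49,5\,10$ (spokes), and $68,8\,10,10\,7,79,96$ (inner pentagram). Let $X$ be the graph on $\{1,\dots,10\}$ with the 15 edges $\{10,1\},\{1,3\},\{3,4\},\{4,9\},\{9,6\},\{6,8\},\{8,5\},\{5,2\},\{2,7\},\{7,10\}$ (a Hamilton cycle) together with $\{2,8\},\{3,10\},\{4,5\},\{1,6\},\{7,9\}$. Then $KC(P)\cong G(10,3)$ and $KC(X)\cong G(10,3)$, while $X$ is not isomorphic to $P$. Thus the Desargues graph $G(10,3)$ is the Kronecker cover of two non-isomorphic simple graphs.
   Context: For a simple graph $G$, the Kronecker cover $KC(G)$ is the graph with vertex set $V(G)\times\{0,1\}$ in which $(u,a)$ is adjacent to $(v,b)$ if and only if $uv\in E(G)$ and $a\neq b$. The generalized Petersen graph $G(n,k)$ has vertices $u_0,\dots,u_{n-1},v_0,\dots,v_{n-1}$ and edges $u_iu_{i+1}$, $u_iv_i$ and $v_iv_{i+k}$, with indices taken mod $n$. $G(10,3)$ is the Desargues graph and $G(5,2)$ is the Petersen graph. The graph $X$ arises as follows: it has edges $\{i,\alpha(j)\}$ for each edge $ij$ of $P$, where $\alpha=(1\,8)(2\,10)(3\,5)$ is an involutive automorphism of $P$ fixing $4,6,7,9$. *)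

(* Defs.v *)
From mathcomp Require Import all_boot.
Set Implicit Arguments. Unset Strict Implicit. Unset Printing Implicit Defensive.

(* Simple graphs are symmetric irreflexive boolean relations on a finType. *)

Definition graph_iso (T U : finType) (e : rel T) (e' : rel U) : Prop :=
  exists f : T -> U, bijective f /\ forall x y, e' (f x) (f y) = e x y.

Definition KC (T : finType) (e : rel T) : rel (T * bool) :=
  fun x y => e x.1 y.1 && (x.2 != y.2).

(* Generalized Petersen graph G(n,k): u_i = (false, i), v_i = (true, i);
   edges u_i u_{i+1}, u_i v_i, v_i v_{i+k}, indices mod n. *)
Definition gp_arc (n k : nat) (x y : bool * 'I_n) : bool :=
  match x.1, y.1 with
  | false, false => (x.2 + 1) %% n == y.2
  | false, true  => x.2 == y.2 :> nat
  | true,  true  => (x.2 + k) %% n == y.2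
  | true,  false => false
  end.
Definition GP (n k : nat) : rel (bool * 'I_n) :=
  fun x y => @gp_arc n k x y || @gp_arc n k y x.

(* A graph on {1,...,10} given by a list of edges with the paper's labels;
   vertex label l is represented by the ordinal l-1 of 'I_10. *)
Definition graph_of_edges (s : seq (nat * nat)) : rel 'I_10 :=
  fun i j => ((i.+1, j.+1) \in s) || ((j.+1, i.+1) \in s).

Definition petersen_edges : seq (nat * nat) :=
  [:: (1,2); (2,3); (3,4); (4,5); (5,1);
      (1,6); (2,7); (3,8); (4,9); (5,10);
      (6,8); (8,10); (10,7); (7,9); (9,6)].

Definition X_edges : seq (nat * nat) :=
  [:: (10,1); (1,3); (3,4); (4,9); (9,6); (6,8); (8,5); (5,2); (2,7); (7,10);
      (2,8); (3,10); (4,5); (1,6); (7,9)].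

Definition Petersen : rel 'I_10 := graph_of_edges petersen_edges.
Definition Xgraph : rel 'I_10 := graph_of_edges X_edges.
Arguments GP : clear implicits.

(* Main.v *)
Require Import Defs.
From mathcomp Require Import all_boot.
Set Implicit Arguments. Unset Strict Implicit. Unset Printing Implicit Defensive.

Definition fP_tbl : seq (nat*nat) := [:: (0,0); (0,6); (0,2); (0,8); (0,4); (1,5); (1,1); (1,7); (1,3); (1,9); (0,5); (0,1); (0,7); (0,3); (0,9); (1,0); (1,6); (1,2); (1,8); (1,4)].
Definition gP_tbl : seq (nat*nat) := [:: (0,0); (1,1); (2,0); (3,1); (4,0); (0,1); (1,0); (2,1); (3,0); (4,1); (5,1); (6,0); (7,1); (8,0); (9,1); (5,0); (6,1); (7,0); (8,1); (9,0)].
Definition fX_tbl : seq (nat*nat) := [:: (0,0); (1,5); (1,7); (0,2); (0,6); (0,4); (1,3); (1,9); (0,8); (1,1); (1,4); (1,6); (0,1); (0,7); (1,2); (0,9); (1,8); (0,5); (0,3); (1,0)].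
Definition gX_tbl : seq (nat*nat) := [:: (0,0); (2,1); (3,0); (8,1); (5,0); (7,1); (4,0); (3,1); (8,0); (5,1); (9,1); (9,0); (4,1); (6,0); (0,1); (1,0); (1,1); (2,0); (6,1); (7,0)].

Definition ords : seq 'I_10 :=
  [:: @Ordinal 10 0 isT; @Ordinal 10 1 isT; @Ordinal 10 2 isT; @Ordinal 10 3 isT;
      @Ordinal 10 4 isT; @Ordinal 10 5 isT; @Ordinal 10 6 isT; @Ordinal 10 7 isT;
      @Ordinal 10 8 isT; @Ordinal 10 9 isT].

Lemma mem_ords (x : 'I_10) : x \in ords.
Proof.
case: x => m Hm.
do 10? (case: m Hm => [|m] Hm; first by []).
by [].
Qed.

Lemma all_ords (P : pred 'I_10) : all P ords -> forall x, P x.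
Proof. by move/allP=> H x; apply: H; apply: mem_ords. Qed.

Definition dom := [seq (i, false) | i <- ords] ++ [seq (i, true) | i <- ords].
Definition cod := [seq (false, i) | i <- ords] ++ [seq (true, i) | i <- ords].

Lemma all_dom (P : pred ('I_10 * bool)) : all P dom -> forall x, P x.
Proof.
rewrite /dom all_cat !all_map => /andP[H1 H2] [i b].
by case: b; [move: H2 | move: H1] => /all_ords; apply.
Qed.

Lemma all_cod (P : pred (bool * 'I_10)) : all P cod -> forall x, P x.
Proof.
rewrite /cod all_cat !all_map => /andP[H1 H2] [b i].
by case: b; [move: H2 | move: H1] => /all_ords; apply.
Qed.

Definition ordn (k : nat) : 'I_10 := nth (@Ordinal 10 0 isT) ords k.

Definition mkf (t : seq (nat*nat)) (x : 'I_10 * bool) : bool * 'I_10 :=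
  let p := nth (0,0) t (x.1 + 10 * x.2) in (p.1 == 1, ordn p.2).
Definition mkg (t : seq (nat*nat)) (y : bool * 'I_10) : 'I_10 * bool :=
  let p := nth (0,0) t (y.2 + 10 * y.1) in (ordn p.1, p.2 == 1).

Lemma iso_of (e : rel 'I_10) ft gt :
  all (fun x => mkg gt (mkf ft x) == x) dom ->
  all (fun y => mkf ft (mkg gt y) == y) cod ->
  all (fun x => all (fun y => GP 10 3 (mkf ft x) (mkf ft y) == KC e x y) dom) dom ->
  graph_iso (KC e) (GP 10 3).
Proof.
move=> /all_dom H1 /all_cod H2 /all_dom H3; exists (mkf ft); split.
  by exists (mkg gt) => z; apply/eqP; [apply: H1 | apply: H2].
by move=> x y; apply/eqP; apply: (all_dom (H3 x)).
Qed.

Lemma isoP : graph_iso (KC Petersen) (GP 10 3).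
Proof. by apply: (@iso_of _ fP_tbl gP_tbl); vm_compute. Qed.
Lemma isoX : graph_iso (KC Xgraph) (GP 10 3).
Proof. by apply: (@iso_of _ fX_tbl gX_tbl); vm_compute. Qed.


Lemma P_notri a b c : ~~ [&& Petersen a b, Petersen b c & Petersen c a].
Proof.
have H : all (fun a => all (fun b => all (fun c =>
   ~~ [&& Petersen a b, Petersen b c & Petersen c a]) ords) ords) ords
  by vm_compute.
move: (all_ords H a) => /all_ords /(_ b) /all_ords; apply.
Qed.

Theorem mainTheorem5 :
  graph_iso (KC Petersen) (GP 10 3) /\
  graph_iso (KC Xgraph) (GP 10 3) /\
  ~ graph_iso Petersen Xgraph.
Proof.
split; first exact: isoP. split; first exact: isoX.
case=> f [[g fg gf] H].
pose a := @Ordinal 10 0 isT. pose b := @Ordinal 10 9 isT. pose c := @Ordinal 10 2 isT.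
have Hab : Xgraph a b by vm_compute. have Hbc : Xgraph b c by vm_compute.
have Hca : Xgraph c a by vm_compute.
move: (P_notri (g a) (g b) (g c)).
by rewrite -!H !gf Hab Hbc Hca.
Qed.
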